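(* In the setting described in the context, if Method 2 stops at iteration $k$ (i.e. $x^{k+1}=x^k$), then $x^k\in\operatorname{zer}(A+B)$.
   Context: Let $\mathcal H$ be a real Hilbert space with inner product $\langle\cdot,\cdot\rangle$ and norm $\|\cdot\|$. Let $A_1:\mathcal H\to\mathcal H$ be $\beta$-cocoercive for some $\beta>0$ (i.e. $\langle A_1x-A_1y,x-y\rangle\ge\beta\|A_1x-A_1y\|^2$ for all $x,y$), let $A_2:\mathcal H\to\mathcal H$ be maximally monotone and uniformly continuous, let $B:\mathcal H\rightrightarrows\mathcal H$ be maximally monotone, and set $A:=A_1+A_2$. Assume $\operatorname{zer}(A+B):=\{x:0\in Ax+Bx\}\neq\emptyset$. $J_{\alpha B}:=(I+\alpha B)^{-1}$ for $\alpha>0$, and $P_C$ denotes the orthogonal projection onto a nonempty closed convex set $C$. Fix $\theta,\delta\in(0,1)$, $\bar\delta>0$ with $1-\delta-\bar\delta>0$, and $\alpha_{-1}>0$ with $\alpha_{-1}\le4\beta\bar\delta$. Conceptual Algorithm: pick $x^0\in\mathcal H$. Given $x^k$ and $\alpha_{k-1}$, for $j\in\mathbb N$ let $\bar x^k_j:=J_{\alpha_{k-1}\theta^jB}(x^k-\alpha_{k-1}\theta^jAx^k)$ and let $j(k)$ be the smallest $j\in\mathbb N$ with $\alpha_{k-1}\theta^j\langle A_2x^k-A_2\bar x^k_j,x^k-\bar x^k_j\rangle\le\delta\|x^k-\bar x^k_j\|^2$. Set $\alpha_k:=\alpha_{k-1}\theta^{j(k)}$, $\bar x^k:=J_{\alpha_kB}(x^k-\alpha_kAx^k)$,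 $r_k:=\frac{\bar\delta}{\alpha_k}\|x^k-\bar x^k\|^2$, $T_k:=\{x\in\mathcal H:\langle \frac{x^k-\bar x^k}{\alpha_k}-(A_2x^k-A_2\bar x^k),x-\bar x^k\rangle\le r_k\}$ and $\Gamma_k:=\{x\in\mathcal H:\langle x^0-x^k,x-x^k\rangle\le0\}$. Method 2 sets $x^{k+1}:=P_{T_k\cap\Gamma_k}(x^0)$ and stops if $x^{k+1}=x^k$. *)

(* Defs.v *)
From mathcomp Require Import all_boot all_order all_algebra.
From mathcomp Require Import all_classical all_reals all_analysis.
Set Implicit Arguments. Unset Strict Implicit. Unset Printing Implicit Defensive.
Import Order.TTheory GRing.Theory Num.Theory.
Import numFieldNormedType.Exports.
Local Open Scope classical_set_scope.
Local Open Scope ring_scope.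

Section Defs.
Variables (R : realType) (H : normedModType R).

(* [ip] is an inner product on H inducing the norm of H:
   symmetric, linear in the first argument, and <x,x> = ||x||^2
   (positive definiteness follows from the norm identity). *)
Definition is_inner_product (ip : H -> H -> R) : Prop :=
  (forall x y, ip x y = ip y x) /\
  (forall (a : R) x y z, ip (a *: x + y) z = a * ip x z + ip y z) /\
  (forall x, ip x x = `|x| ^+ 2).

Variable ip : H -> H -> R.

(* set-valued operators H =>> H are relations T x u, meaning u \in T x *)
Definition monotone_op (T : H -> set H) : Prop :=
  forall x y u v, T x u -> T y v -> 0 <= ip (u - v) (x - y).

Definition maximally_monotone (T : H -> set H) : Prop :=
  monotone_op T /\
  forall S : H -> set H, monotone_op S ->
    (forall x u, T x u -> S x u) -> forall x u, S x u -> T x u.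

Definition op_of (f : H -> H) : H -> set H := fun x => [set f x].

Definition cocoercive (beta : R) (f : H -> H) : Prop :=
  forall x y, ip (f x - f y) (x - y) >= beta * `|f x - f y| ^+ 2.

(* z = J_{aB}(y) = (I + aB)^{-1} y, i.e. y \in z + a B z *)
Definition is_resolvent (a : R) (B : H -> set H) (y z : H) : Prop :=
  exists u, B z u /\ y = z + a *: u.

Definition is_proj (C : set H) (x p : H) : Prop :=
  C p /\ forall y, C y -> `|x - p| <= `|x - y|.

Definition zer_sum (A : H -> H) (B : H -> set H) : set H :=
  [set x | B x (- A x)].

End Defs.

(* Main.v *)
Require Import Defs.
From mathcomp Require Import all_boot all_order all_algebra.
From mathcomp Require Import all_classical all_reals all_analysis.
From mathcomp Require Import ring lra.
Import Order.TTheory GRing.Theory Num.Theory.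
Import numFieldNormedType.Exports.
Local Open Scope classical_set_scope.
Local Open Scope ring_scope.

Lemma ip_lin (R : realType) (H : normedModType R) (ip : H -> H -> R) :
  is_inner_product ip -> forall a (u w z : H),
  ip (a *: u - w) z = a * ip u z - ip w z.
Proof.
move=> [_ [L _]] a u w z.
have h0 : ip 0 z = 0.
  have := L 1 0 0 z; rewrite scaler0 addr0 mul1r => e.
  by apply/eqP; rewrite -(subr_eq0 (ip 0 z)) -[X in X - _]addr0 -addrA subrr addr0 ; move: e => /eqP; rewrite -subr_eq0 opprD addrA subrr sub0r oppr_eq0 => /eqP ->.
have hN : ip (- w) z = - ip w z.
  have := L (-1) w 0 z; rewrite addr0 h0 addr0 scaleN1r => ->; by rewrite mulN1r.
by rewrite L hN.
Qed.
Theorem proposition4p10 (R : realType) (H : completeNormedModType R)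
  (ip : H -> H -> R) (A1 A2 : H -> H) (B : H -> set H)
  (beta theta delta deltab alpham1 : R)
  (x : nat -> H) (alpha : nat -> R) (j : nat -> nat) (xb : nat -> nat -> H)
  (k : nat) :
  is_inner_product ip ->
  0 < beta -> cocoercive ip beta A1 ->
  maximally_monotone ip (op_of A2) -> unif_continuous A2 ->
  maximally_monotone ip B ->
  (exists z, zer_sum (fun y => A1 y + A2 y) B z) ->
  0 < theta < 1 -> 0 < delta < 1 -> 0 < deltab -> 0 < 1 - delta - deltab ->
  0 < alpham1 -> alpham1 <= 4 * beta * deltab ->
  let A := fun y => A1 y + A2 y in
  (* alpha_{i-1}, with alpha_{-1} = alpham1 *)
  let aprev := fun i : nat => if i is i'.+1 then alpha i' else alpham1 in
  (* xb i j' = \bar x^i_{j'} *)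
  (forall i j', (i <= k)%N ->
     is_resolvent (aprev i * theta ^+ j') B
       (x i - (aprev i * theta ^+ j') *: A (x i)) (xb i j')) ->
  let cond := fun i j' =>
     aprev i * theta ^+ j' * ip (A2 (x i) - A2 (xb i j')) (x i - xb i j')
       <= delta * `|x i - xb i j'| ^+ 2 in
  (* j i = j(i) is the smallest j' satisfying the line-search condition *)
  (forall i, (i <= k)%N -> cond i (j i) /\ forall j', (j' < j i)%N -> ~ cond i j') ->
  (forall i, (i <= k)%N -> alpha i = aprev i * theta ^+ j i) ->
  let xbar := fun i => xb i (j i) in
  let r := fun i => deltab / alpha i * `|x i - xbar i| ^+ 2 in
  let T := fun i => [set y | ip ((alpha i)^-1 *: (x i - xbar i)
                                  - (A2 (x i) - A2 (xbar i))) (y - xbar i) <= r i] in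
  let Gamma := fun i => [set y | ip (x 0%N - x i) (y - x i) <= 0] in
  (forall i, (i <= k)%N -> is_proj (T i `&` Gamma i) (x 0%N) (x i.+1)) ->
  x k.+1 = x k ->
  zer_sum A B (x k).
Proof.
move=> hip hbeta hcoc hA2 huc hB hz /andP[th0 th1] /andP[de0 de1] db0 hdd a0 ha0 A aprev hres cond hj halpha xbar r T Gamma hproj hstop.
have apos : forall i, (i <= k)%N -> 0 < alpha i.
  elim=> [|i IH] hi.
    by rewrite halpha // mulr_gt0 // exprn_gt0.
  rewrite halpha //= mulr_gt0 ?exprn_gt0 //; apply: IH; exact: ltnW.
have ak := apos k (leqnn k).
have [[hT _] _] := hproj k (leqnn k).
rewrite /T /= hstop in hT.
have [hc _] := hj k (leqnn k).
rewrite /cond -halpha // in hc.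
set d := x k - xbar k in hT.
set w := A2 (x k) - A2 (xbar k) in hT.
rewrite -/(xbar k) -/d -/w in hc.
rewrite ip_lin // /r in hT.
have [_ [_ N]] := hip.
rewrite N in hT.
have hd : `|d| ^+ 2 <= 0.
  have e1 : alpha k * ((alpha k)^-1 * `|d| ^+ 2 - ip w d) <= alpha k * (deltab / alpha k * `|d| ^+ 2).
    by rewrite ler_pM2l.
  have E1 : alpha k * ((alpha k)^-1 * `|d| ^+ 2 - ip w d) = `|d| ^+ 2 - alpha k * ip w d.
    by field; rewrite gt_eqF.
  have E2 : alpha k * (deltab / alpha k * `|d| ^+ 2) = deltab * `|d| ^+ 2.
    by field; rewrite gt_eqF.
  rewrite E1 E2 in e1.
  have : (1 - delta - deltab) * `|d| ^+ 2 <= 0 by nra.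
  by rewrite pmulr_rle0.
have d0 : d = 0.
  apply/eqP; rewrite -normr_eq0 -sqrf_eq0; apply/eqP/le_anti.
  by rewrite hd sqr_ge0.
have [u [Bu eq]] := hres k (j k) (leqnn k).
rewrite /zer_sum /=.
have xe : xbar k = x k by apply/eqP; rewrite eq_sym -subr_eq0 -/d d0.
rewrite -halpha // in eq.
move: Bu; rewrite -/(xbar k) xe.
have : u = - A (x k).
  move: eq; rewrite -/(xbar k) xe => eq.
  have e2 : - (alpha k *: A (x k)) = alpha k *: u := addrI (x k) eq.
  have e3 : alpha k *: (u + A (x k)) = 0 by rewrite scalerDr -e2 addNr.
  move/eqP: e3; rewrite scaler_eq0 (gt_eqF ak) /= addr_eq0 => /eqP.
  done.
move=> ue; rewrite -ue. exact.
Qed.
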